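(* If $A\subset\mathbb{X}$ is an open set with $\eta(\partial A)=0$, then $\tau(\overline A)\le\eta(A)$.
   Context: $\mathbb{X}$ is a compact metric space. $(\xi_j)_{j\in\mathbb N}$ is a sequence of finitely additive outer probabilities on $\mathbb{X}$ (set functions on all subsets, values in $[0,1]$, finitely additive, $\xi_j(\mathbb{X})=1$). For $A\subset\mathbb{X}$, $\tau(A)=\limsup_{n\to\infty}\frac1n\sum_{j=0}^{n-1}\xi_j(A)$. For $Y\subset\mathbb{X}$ and $r>0$, $\nu_r(Y)=\inf\sum_{I\in\mathcal I}\tau(I)$ over all countable covers $\mathcal I$ of $Y$ by open sets of diameter at most $r$; $\nu(Y)=\sup_{r>0}\nu_r(Y)$; $\eta$ is the restriction of $\nu$ to the Borel $\sigma$-algebra. $\partial A$ is the topological boundary and $\overline A$ the closure. *)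

(* Defs.v *)
From HB Require Import structures.
From mathcomp Require Import all_boot all_order all_algebra.
From mathcomp Require Import all_classical all_reals all_analysis.
Set Implicit Arguments. Unset Strict Implicit. Unset Printing Implicit Defensive.
Import Order.TTheory GRing.Theory Num.Theory.
Local Open Scope classical_set_scope.
Local Open Scope ring_scope.

Section Defs.
Context {R : realType} {X : metricType R}.

Definition fa_outer_prob (xi : set X -> R) : Prop :=
  [/\ forall A, 0 <= xi A <= 1,
      forall A B, A `&` B = set0 -> xi (A `|` B) = xi A + xi B
    & xi setT = 1].

Definition tau (xi : nat -> set X -> R) (A : set X) : \bar R :=
  limn_esup (fun n => ((\sum_(0 <= j < n) xi j A) / n%:R)%:E).

Definition diam_le (I : set X) (r : R) : Prop :=
  forall x y, I x -> I y -> mdist x y <= r.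

(* nu_r(Y): infimum over countable covers by open sets of diameter <= r
   (a countable family is indexed by nat; finite families are padded with set0) *)
Definition nu_r (xi : nat -> set X -> R) (r : R) (Y : set X) : \bar R :=
  ereal_inf [set s : \bar R | exists I : nat -> set X,
     [/\ forall n, open (I n), forall n, diam_le (I n) r,
         Y `<=` \bigcup_n I n
       & s = (\sum_(0 <= n <oo) tau xi (I n))%E]].

Definition nu (xi : nat -> set X -> R) (Y : set X) : \bar R :=
  ereal_sup [set nu_r xi r Y | r in [set r : R | 0 < r]].

(* etaB = restriction of nu to Borel sets *)
Definition etaB (xi : nat -> set X -> R) (B : set X) : \bar R := nu xi B.

Definition bdry (A : set X) : set X := closure A `\` interior A.

End Defs.

(* Main.v *)
Require Import Defs.
From HB Require Import structures.
From mathcomp Require Import all_boot all_order all_algebra.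
From mathcomp Require Import all_classical all_reals all_analysis.
Import Order.TTheory GRing.Theory Num.Theory.
Local Open Scope classical_set_scope.
Local Open Scope ring_scope.

Section Aux.
Context {R : realType}.
Local Open Scope ereal_scope.

Lemma limsup_mono (u v : (\bar R)^nat) : (forall n, u n <= v n) ->
  limn_esup u <= limn_esup v.
Proof.
move=> uv; rewrite !limn_esup_lim; apply: lee_lim; try exact: is_cvg_esups.
apply: nearW => n; apply: ge_ereal_sup => _ [k /= nk <-].
apply: le_trans (uv k) _; apply: ereal_sup_ubound; by exists k.
Qed.

Lemma limsup_add (u v : (\bar R)^nat) : (forall n, 0 <= u n) ->
  (forall n, 0 <= v n) ->
  limn_esup (fun n => u n + v n) <= limn_esup u + limn_esup v.
Proof.
move=> u0 v0.
have eu n : 0 <= esups u n.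
  by apply: le_trans (u0 n) _; apply: ereal_sup_ubound; exists n => /=.
have ev n : 0 <= esups v n.
  by apply: le_trans (v0 n) _; apply: ereal_sup_ubound; exists n => /=.
have lu : 0 <= limn (esups u) by apply: lime_ge; [exact: is_cvg_esups|exact: nearW].
have lv : 0 <= limn (esups v) by apply: lime_ge; [exact: is_cvg_esups|exact: nearW].
have df : limn (esups u) +? limn (esups v) by apply: ge0_adde_def.
rewrite !limn_esup_lim -limeD //; try exact: is_cvg_esups.
apply: lee_lim; first exact: is_cvg_esups.
  by apply: is_cvgeD => //; exact: is_cvg_esups.
apply: nearW => n; apply: ge_ereal_sup => _ [k /= nk <-].
apply: leeD; apply: ereal_sup_ubound; by exists k.
Qed.

Lemma limsup_cst0 : limn_esup (fun _ : nat => (0 : \bar R)) = 0.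
Proof. by rewrite (cvg_limn_einf_sup (cvg_cst (0 : \bar R))). Qed.

End Aux.

Section Tau.
Context {R : realType} {X : metricType R}.
Variable xi : nat -> set X -> R.
Hypothesis hxi : forall j, fa_outer_prob (xi j).

Lemma xi_ge0 j A : 0 <= xi j A.
Proof. by case: (hxi j) => h _ _; case/andP: (h A). Qed.

Lemma xi_mono j A B : A `<=` B -> xi j A <= xi j B.
Proof.
move=> AB; case: (hxi j) => _ hadd _.
have -> : B = A `|` (B `\` A).
  by apply/seteqP; split => x; [move=> Bx; case: (pselect (A x)) => ?; [left|right]|case=> //; [apply: AB|case]].
rewrite hadd; first by rewrite lerDl xi_ge0.
by apply/seteqP; split => x // [? []].
Qed.

Lemma xi_sub j A B : xi j (A `|` B) <= xi j A + xi j B.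
Proof.
case: (hxi j) => _ hadd _.
have -> : A `|` B = A `|` (B `\` A).
  apply/seteqP; split => x; first by case=> ?; [left|case: (pselect (A x)) => ?; [left|right]].
  by case=> [?|[]]; [left|right].
rewrite hadd; first by rewrite lerD2l; apply: xi_mono => x [].
by apply/seteqP; split => x // [? []].
Qed.

Definition avg (A : set X) (n : nat) : R := (\sum_(0 <= j < n) xi j A) / n%:R.

Lemma avg_ge0 A n : 0 <= avg A n.
Proof. by rewrite /avg divr_ge0 // sumr_ge0 // => j _; exact: xi_ge0. Qed.

Lemma avg_mono A B n : A `<=` B -> avg A n <= avg B n.
Proof.
move=> AB; rewrite /avg ler_wpM2r // ?invr_ge0 //.
by apply: ler_sum => j _; exact: xi_mono.
Qed.

Lemma avg_sub A B n : avg (A `|` B) n <= avg A n + avg B n.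
Proof.
rewrite /avg -mulrDl ler_wpM2r // ?invr_ge0 // -big_split /=.
by apply: ler_sum => j _; exact: xi_sub.
Qed.

Lemma tau_ge0 A : (0 <= tau xi A)%E.
Proof.
rewrite -(@limsup_cst0 R); apply: limsup_mono => n; rewrite lee_fin.
exact: avg_ge0.
Qed.

Lemma tau_mono A B : A `<=` B -> (tau xi A <= tau xi B)%E.
Proof. move=> AB; apply: limsup_mono => n; rewrite lee_fin; exact: avg_mono. Qed.

Lemma tau_sub A B : (tau xi (A `|` B) <= tau xi A + tau xi B)%E.
Proof.
rewrite /tau; apply: le_trans; last apply: limsup_add.
- by apply: limsup_mono => n /=; rewrite lee_fin; exact: avg_sub.
- by move=> n; rewrite lee_fin; exact: avg_ge0.
- by move=> n; rewrite lee_fin; exact: avg_ge0.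
Qed.

Lemma tau0 : (tau xi set0 <= 0)%E.
Proof.
rewrite -(@limsup_cst0 R); apply: limsup_mono => n; rewrite lee_fin.
rewrite /avg big1 ?mul0r // => j _.
case: (hxi j) => _ hadd _.
have := hadd set0 set0; rewrite setU0 setI0 => /(_ erefl) h.
by apply/eqP; rewrite -(inj_eq (addrI (xi j set0))) addr0 -h.
Qed.

Lemma tau_finU (F : nat -> set X) N :
  (tau xi [set x | exists2 k, (k < N)%N & F k x] <=
    \sum_(0 <= k < N) tau xi (F k))%E.
Proof.
elim: N => [|N IH].
  rewrite big_geq //; apply: le_trans tau0; apply: tau_mono => x [k]//.
rewrite big_nat_recr //=.
apply: le_trans (leeD IH (lexx _)); apply: le_trans (tau_sub _ _).
apply: tau_mono => x [k]; rewrite ltnS leq_eqVlt => /orP[/eqP->|kN] Fk.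
  by right.
by left; exists k.
Qed.

End Tau.

Theorem mainTheorem12 (R : realType) (X : metricType R)
  (hX : compact [set: X])
  (xi : nat -> set X -> R) (hxi : forall j, fa_outer_prob (xi j))
  (A : set X) (hA : open A)
  (hbd : etaB xi (bdry A) = 0%E) :
  (tau xi (closure A) <= etaB xi A)%E.
Proof.
have nub : (nu_r xi 1 (bdry A) <= 0)%E.
  rewrite -hbd /etaB /nu; apply: ereal_sup_ubound; exists 1 => //=.
have Kc : compact (closure A).
  by apply: subclosed_compact hX _; [exact: closed_closure|].
apply: (@le_trans _ _ (nu_r xi 1 A)); last first.
  by rewrite /etaB /nu; apply: ereal_sup_ubound; exists 1 => //=.
apply: le_ereal_inf_tmp => _ [J [Jo Jd AJ ->]].
apply/lee_addgt0Pr => e e0.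
have : (nu_r xi 1 (bdry A) < e%:E)%E by apply: le_lt_trans nub _; rewrite lte_fin.
case/ereal_inf_lt => _ [I [Io Id BI ->]] te.
have cov : closure A `<=` cover [set: nat] (fun n => J n `|` I n).
  move=> x Kx; case: (pselect (A x)) => Ax.
    by have [n _ Jn] := AJ x Ax; exists n => //; left.
  have Bx : bdry A x by split => // /interior_subset.
  by have [n _ In] := BI x Bx; exists n => //; right.
have [N _ sub] : \forall N \near \oo,
    closure A `<=` [set x | exists2 k, (k < N)%N & (J k `|` I k) x].
  move/compact_near_coveringP: Kc => Kc; apply: Kc.
  move=> x /cov [n _ xn].
  exists (J n `|` I n, [set i | (n < i)%N]) => /=.
    split; first by apply: open_nbhs_nbhs; split => //; exact: openU.
    by exists n.+1.
  by case=> y i /= [yn ni]; exists n.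
have {}sub := sub N (leqnn N).
apply: (le_trans (tau_mono _ hxi _ _ sub)).
apply: (le_trans (tau_finU _ hxi (fun k => J k `|` I k) N)).
apply: (@le_trans _ _ (\sum_(0 <= k < N) (tau xi (J k) + tau xi (I k)))%E).
  by apply: lee_sum => k _; exact: (tau_sub _ hxi).
rewrite big_split /=; apply: leeD.
  exact: (@nneseries_lim_ge R (fun n => tau xi (J n)) xpredT 0%N N (fun n _ _ => tau_ge0 xi hxi (J n))).
apply: le_trans (ltW te).
exact: (@nneseries_lim_ge R (fun n => tau xi (I n)) xpredT 0%N N (fun n _ _ => tau_ge0 xi hxi (I n))).
Qed.
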